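(* Let $d\ge 1$. There is a constant $C>0$ depending only on $d$ such that for all $n\ge d+1$, every $\mathcal{F}$ and $B_1,\dots,B_m$ as in the context, and every $A\subseteq[n]$, the number of indices $i\in[m]$ with $B_i=A$ is at most $C$. Consequently, for each integer $0\le s\le d$, the number of indices $i\in[m]$ with $|B_i|=s$ is at most $C\binom{n}{s}$.
   Context: Let $\mathcal{F}=\{F_1,\dots,F_m\}\subseteq\binom{[n]}{d+1}$ consist of distinct sets and have VC-dimension at most $d$ (no $(d+1)$-set $S$ is shattered, i.e. no $S$ such that every $A\subseteq S$ equals $F\cap S$ for some $F\in\mathcal{F}$). For $i\in[m]$, call $B\subsetneq F_i$ admissible for $F_i$ if $F\cap F_i\neq B$ for every $F\in\mathcal{F}$ (admissible sets exist by the VC-dimension assumption). For each $i$, $B_i$ is a fixed admissible set for $F_i$ of maximum cardinality among all admissible sets for $F_i$. *)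

(* Defs.v *)
(* Ground set [n] is modelled by 'I_n; a family F_1..F_m
   by an indexing function F : 'I_m -> {set 'I_n}. *)
From mathcomp Require Import all_boot all_order.
Set Implicit Arguments. Unset Strict Implicit. Unset Printing Implicit Defensive.

Definition shattered (n m : nat) (F : 'I_m -> {set 'I_n}) (S : {set 'I_n}) : Prop :=
  forall A : {set 'I_n}, A \subset S -> exists i : 'I_m, F i :&: S = A.

Definition VCdim_le (n m : nat) (F : 'I_m -> {set 'I_n}) (d : nat) : Prop :=
  forall S : {set 'I_n}, #|S| = d.+1 -> ~ shattered F S.

Definition admissible (n m : nat) (F : 'I_m -> {set 'I_n}) (i : 'I_m)
  (B : {set 'I_n}) : Prop :=
  B \proper F i /\ forall j : 'I_m, F j :&: F i <> B.

Definition max_admissible (n m : nat) (F : 'I_m -> {set 'I_n}) (i : 'I_m)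
  (B : {set 'I_n}) : Prop :=
  admissible F i B /\ forall B' : {set 'I_n}, admissible F i B' -> #|B'| <= #|B|.

(* Main.v *)
Require Import Defs.
From mathcomp Require Import all_boot all_order.

Lemma card_bigcup_le (T I : finType) (P : {pred I}) (f : I -> {set T}) :
  #|\bigcup_(i in P) f i| <= \sum_(i in P) #|f i|.
Proof.
elim/big_rec2: _ => [|i U s _ IH]; first by rewrite cards0.
by rewrite (leq_trans (leq_card_setU _ _)) // leq_add2l.
Qed.

Section Key.
Variables (d n m : nat) (F : 'I_m -> {set 'I_n}) (B : 'I_m -> {set 'I_n}).
Hypothesis injF : injective F.
Hypothesis cardF : forall i, #|F i| = d.+1.
Hypothesis hB : forall i, max_admissible F i (B i).
Variable A : {set 'I_n}.

Let H (K : {set 'I_n}) := [set i | (B i == A) && (K \subset F i)].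

Lemma one_le (K : {set 'I_n}) i : i \in H K ->
  (forall i', i' \in H K -> i' = i) -> #|H K| <= 1.
Proof.
move=> _ h; rewrite -(cards1 i); apply: subset_leq_card.
by apply/subsetP=> x /h ->; rewrite inE.
Qed.

Lemma subF_eq i i' : F i \subset F i' -> F i = F i'.
Proof. move=> s. apply/eqP. rewrite eqEcard. rewrite s. rewrite !cardF. exact: ltnSn. Qed.

Lemma BA_sub i : B i = A -> A \subset F i.
Proof. move=> e; case: (hB i) => [[p _] _]; rewrite -e; exact: proper_sub p. Qed.

Lemma key r : forall K : {set 'I_n}, A \subset K -> d.+1 - #|K| <= r -> #|H K| <= d.+1 ^ r.
Proof.
elim: r => [|r IH] K AK hr.
  case: (set_0Vmem (H K)) => [->|[i Hi]]; first by rewrite cards0.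
  rewrite expn0; apply: (one_le _ _ Hi).
  move: (Hi); rewrite inE => /andP[_ Ki].
  have eK : K = F i by apply/eqP; rewrite eqEcard Ki cardF; by rewrite /= -subn_eq0 -leqn0.
  move=> i' ; rewrite inE => /andP[_ Ki']; apply: injF.
  by apply/esym/subF_eq; rewrite -eK.
case: (set_0Vmem (H K)) => [->|[i Hi]]; first by rewrite cards0.
have pos : 1 <= d.+1 ^ r.+1 by rewrite expn_gt0.
move: (Hi); rewrite inE => /andP[/eqP Bi Ki].
case: (boolP (F i \subset K)) => [FK|].
  apply: (@leq_trans 1 _ _ _ pos); apply: (one_le _ _ Hi) => i'; rewrite inE => /andP[_ Ki']; apply: injF.
  by apply/esym/subF_eq; apply: subset_trans FK Ki'.
case/subsetPn => y yF yK.
have yA : y \notin A by apply: contra yK; apply: (subsetP AK).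
have AFi := BA_sub _ Bi.
have admi : forall i', i' \in H K -> forall j, F j :&: F i' <> A.
  move=> i'; rewrite inE => /andP[/eqP Bi' _] j; case: (hB i') => [[_ +] _].
  by rewrite Bi'.
case: (boolP (y |: A == F i)) => [/eqP eS|neS].
  apply: (@leq_trans 1 _ _ _ pos); apply: (one_le _ _ Hi) => i' Hi'.
  move: (Hi'); rewrite inE => /andP[/eqP Bi' _]; apply: injF.
  have AFi' := BA_sub _ Bi'.
  have : F i' :&: F i <> A by apply: (admi i Hi).
  move=> ne; apply/esym/subF_eq; rewrite -eS subUset AFi' andbT sub1set.
  apply: contraT => yF'; case: ne; apply/eqP; rewrite eqEsubset subsetI AFi' AFi andbT.
  rewrite andbT; apply/subsetP => x; rewrite inE => /andP[xF'].
  rewrite -eS !inE => /orP[/eqP xy|//]; subst x; by rewrite xF' in yF'.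
set S := y |: A.
have SF : S \subset F i by rewrite subUset sub1set yF AFi.
have [j hj] : exists j, F j :&: F i = S.
  case: (boolP [exists j, F j :&: F i == S]) => [/existsP[j /eqP hj]|hne].
    by exists j.
  have adm : admissible F i S.
    split; first by rewrite properEneq SF andbT.
    move=> j hj; apply: (negP hne); apply/existsP; exists j; exact/eqP.
  case: (hB i) => [_ /(_ S adm)]; rewrite Bi cardsU1 yA /=.
  by rewrite ltnn.
have AFj : A \subset F j.
  by apply: subset_trans (subsetIl _ (F i)); rewrite hj subsetUr.
have cov : H K \subset \bigcup_(z in F j :\: K) H (z |: K).
  apply/subsetP => i' Hi'.
  move: (Hi'); rewrite inE => /andP[/eqP Bi' Ki'].
  have AFi' := BA_sub _ Bi'.
  have ne := admi i' Hi' j.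
  have : (F j :&: F i') :\: A != set0.
    rewrite setD_eq0; apply: contra_notN ne => s; apply/eqP.
    by rewrite eqEsubset s subsetI AFj AFi'.
  case/set0Pn => z; rewrite !inE => /andP[zA /andP[zj zi']].
  have zK : z \notin K.
    apply/negP => zK; have zi : z \in F i by apply: (subsetP Ki).
    have : z \in F j :&: F i by rewrite inE zj zi.
    rewrite hj !inE (negbTE zA) orbF => /eqP ezy.
    by rewrite -ezy zK in yK.
  apply/bigcupP; exists z; first by rewrite inE zK zj.
  by rewrite inE Bi' eqxx /= subUset sub1set zi' Ki'.
apply: leq_trans (subset_leq_card cov) _.
apply: leq_trans; first exact: card_bigcup_le.
apply: (@leq_trans (\sum_(z in F j :\: K) d.+1 ^ r)).
  apply: leq_sum => z; rewrite inE => /andP[zK _]; apply: IH.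
    by apply: subset_trans AK (subsetUr _ _).
  by move: hr; rewrite cardsU1 zK add1n subnS; case: (d.+1 - #|K|).
rewrite sum_nat_const expnS leq_mul2r; apply/orP; right.
by rewrite -(cardF j); apply: subset_leq_card; apply: subsetDl.
Qed.

End Key.

Theorem claim3p2 (d : nat) (hd : 1 <= d) :
  exists C : nat, 0 < C /\
    forall (n m : nat) (F : 'I_m -> {set 'I_n}) (B : 'I_m -> {set 'I_n}),
      d.+1 <= n ->
      injective F ->
      (forall i, #|F i| = d.+1) ->
      VCdim_le F d ->
      (forall i, max_admissible F i (B i)) ->
      (forall A : {set 'I_n}, #|[set i | B i == A]| <= C) /\
      (forall s : nat, s <= d -> #|[set i | #|B i| == s]| <= C * 'C(n, s)).
Proof.
exists (d.+1 ^ d.+1); split; first by rewrite expn_gt0.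
move=> n m F B _ injF cardF _ hB.
have one : forall A : {set 'I_n}, #|[set i | B i == A]| <= d.+1 ^ d.+1.
  move=> A; apply: leq_trans (@key d n m F B injF cardF hB A d.+1 A (subxx A) (leq_subr #|A| d.+1)).
  apply: subset_leq_card; apply/subsetP => i; rewrite !inE => /eqP e.
  by rewrite e eqxx /= (@BA_sub n m F B hB A i e).
split=> // s _.
have cov : [set i | #|B i| == s] \subset
           \bigcup_(A in [set A : {set 'I_n} | #|A| == s]) [set i | B i == A].
  apply/subsetP => i; rewrite inE => hs; apply/bigcupP; exists (B i).
    by rewrite inE.
  by rewrite inE.
apply: leq_trans (subset_leq_card cov) _.
apply: leq_trans; first exact: card_bigcup_le.
apply: (@leq_trans (\sum_(A in [set A : {set 'I_n} | #|A| == s]) d.+1 ^ d.+1)).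
  by apply: leq_sum => A _; apply: one.
by rewrite sum_nat_const card_draws card_ord mulnC.
Qed.
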